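(* There exist absolute constants $c>0$ and $k_0$ such that for every $k\ge k_0$ and every $f(x,y)\in\mathbb{C}[x,y]$ whose Newton polytope has exactly $k$ vertices, there exists $a\in\mathbb{C}\setminus\{0\}$ such that the real univariate polynomial $\Re(f(x,a))$ has at least $ck$ distinct real roots.
   Context: $\mathrm{Newt}(f)$ is the convex hull of $\{(i,j):a_{i,j}\ne0\}$ for $f=\sum a_{i,j}x^iy^j$. For a univariate complex polynomial $g(x)=\sum_ia_ix^i$, $\Re(g):=\sum_i\Re(a_i)x^i\in\mathbb{R}[x]$. *)

(* Defs.v *)
From Stdlib Require Import Reals List.
Import ListNotations.
Open Scope R_scope.

Definition Cx : Type := (R * R)%type.
Definition C0 : Cx := (0, 0).
Definition Cadd (z w : Cx) : Cx := (fst z + fst w, snd z + snd w).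
Definition Cmul (z w : Cx) : Cx :=
  (fst z * fst w - snd z * snd w, fst z * snd w + snd z * fst w).
Fixpoint Cpow (z : Cx) (n : nat) : Cx :=
  match n with O => (1, 0) | S m => Cmul z (Cpow z m) end.
Definition Re (z : Cx) : R := fst z.

(* csum f n = f 0 + ... + f n *)
Fixpoint csum (f : nat -> Cx) (n : nat) : Cx :=
  match n with O => f O | S m => Cadd (csum f m) (f (S m)) end.

(* A bivariate complex polynomial f = sum_{i,j} a i j x^i y^j is given by its
   coefficient function a together with a bound N such that a i j = 0
   whenever i > N or j > N. *)
Definition bounded_coefs (a : nat -> nat -> Cx) (N : nat) : Prop :=
  forall i j, (N < i)%nat \/ (N < j)%nat -> a i j = C0.

Definition support (a : nat -> nat -> Cx) (p : nat * nat) : Prop :=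
  a (fst p) (snd p) <> C0.

Definition in_conv_hull (P : nat * nat -> Prop) (p : nat * nat) : Prop :=
  exists l : list (R * (nat * nat)),
    Forall (fun wq => 0 <= fst wq /\ P (snd wq)) l /\
    fold_right Rplus 0 (map fst l) = 1 /\
    fold_right Rplus 0 (map (fun wq => fst wq * INR (fst (snd wq))) l) = INR (fst p) /\
    fold_right Rplus 0 (map (fun wq => fst wq * INR (snd (snd wq))) l) = INR (snd p).

(* Vertices (extreme points) of Newt(f) = conv(support): the points of the
   support not lying in the convex hull of the other support points. *)
Definition newton_vertex (a : nat -> nat -> Cx) (p : nat * nat) : Prop :=
  support a p /\ ~ in_conv_hull (fun q => support a q /\ q <> p) p.

Definition newton_num_vertices (a : nat -> nat -> Cx) (k : nat) : Prop :=
  exists l : list (nat * nat),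
    NoDup l /\ length l = k /\ (forall p, In p l <-> newton_vertex a p).

Definition coef_at (a : nat -> nat -> Cx) (N : nat) (y0 : Cx) (i : nat) : Cx :=
  csum (fun j => Cmul (a i j) (Cpow y0 j)) N.

Definition re_eval (a : nat -> nat -> Cx) (N : nat) (y0 : Cx) (x : R) : R :=
  sum_f_R0 (fun i => Re (coef_at a N y0 i) * x ^ i) N.

(* Main.v *)
Require Import Defs.
From Stdlib Require Import Reals List Lra Lia Classical ZArith Sorting.
From Coquelicot Require Coquelicot.
Import ListNotations.
Open Scope R_scope.

Lemma my_exists_above {A} (g : A -> R) (L : list A) :
  exists lam, forall x, In x L -> g x < lam.
Proof.
  induction L as [|x L [lam IH]].
  - exists 0. intros x [].
  - exists (Rmax lam (g x + 1)). intros y [<-|Hy].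
    + eapply Rlt_le_trans; [|apply Rmax_r]. lra.
    + eapply Rlt_le_trans; [apply IH; auto|apply Rmax_l].
Qed.

Lemma my_exists_between {A} (g : A -> R) (U : R) (L : list A) :
  (forall x, In x L -> g x < U) ->
  exists lam, lam < U /\ forall x, In x L -> g x < lam.
Proof.
  induction L as [|x L IH]; intros H.
  - exists (U - 1). split; [lra| intros x []].
  - destruct IH as [lam [H1 H2]]. { intros; apply H; simpl; auto. }
    assert (Hx : g x < U) by (apply H; simpl; auto).
    exists (Rmax lam ((g x + U)/2)). split.
    + apply Rmax_lub_lt; lra.
    + intros y [<-|Hy].
      * eapply Rlt_le_trans; [|apply Rmax_r]. lra.
      * eapply Rlt_le_trans; [apply H2; auto|apply Rmax_l].
Qed.

Lemma div_lt_mult a b c : 0 < b -> a / b < c -> a < c * b.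
Proof.
  intros Hb H. apply Rmult_lt_compat_r with (r := b) in H; auto.
  unfold Rdiv in H. rewrite Rmult_assoc, Rinv_l in H; lra.
Qed.

Lemma lt_div_mult a b c : 0 < b -> c < a / b -> c * b < a.
Proof.
  intros Hb H. apply Rmult_lt_compat_r with (r := b) in H; auto.
  unfold Rdiv in H. rewrite Rmult_assoc, Rinv_l in H; lra.
Qed.

Lemma mult_lt_div a b c : 0 < b -> a < c * b -> a / b < c.
Proof.
  intros Hb H. apply Rmult_lt_reg_r with b; auto.
  unfold Rdiv. rewrite Rmult_assoc, Rinv_l; lra.
Qed.

Lemma lt_div_of a b c : 0 < c -> a * c < b -> a < b / c.
Proof.
  intros Hc H. apply Rmult_lt_reg_r with c; auto.
  unfold Rdiv. rewrite Rmult_assoc, Rinv_l; lra.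
Qed.

Lemma orth_zero w1 w2 u1 u2 : ~ (w1 = 0 /\ w2 = 0) ->
  w1 * u1 + w2 * u2 = 0 -> - w2 * u1 + w1 * u2 = 0 -> u1 = 0 /\ u2 = 0.
Proof.
  intros Hw H1 H2.
  assert (Hn : w1*w1 + w2*w2 <> 0).
  { intro E. apply Hw. split; nra. }
  assert (E1 : u1 * (w1*w1+w2*w2) = 0).
  { replace (u1 * (w1*w1+w2*w2)) with (w1*(w1*u1+w2*u2) - w2*(-w2*u1+w1*u2)) by ring.
    rewrite H1, H2; ring. }
  assert (E2 : u2 * (w1*w1+w2*w2) = 0).
  { replace (u2 * (w1*w1+w2*w2)) with (w2*(w1*u1+w2*u2) + w1*(-w2*u1+w1*u2)) by ring.
    rewrite H1, H2; ring. }
  apply Rmult_integral in E1; apply Rmult_integral in E2. tauto.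
Qed.

Section Sep.
Variable P : Type.
Variables X Y : P -> R.
Variables vx vy : R.

Definition wd (w1 w2 : R) (q : P) := w1 * (vx - X q) + w2 * (vy - Y q).

Definition hull_comb (L : list P) : Prop :=
  exists l : list (R * P), Forall (fun wq => 0 <= fst wq /\ In (snd wq) L) l /\
     fold_right Rplus 0 (map fst l) = 1 /\
     fold_right Rplus 0 (map (fun wq => fst wq * X (snd wq)) l) = vx /\
     fold_right Rplus 0 (map (fun wq => fst wq * Y (snd wq)) l) = vy.

Lemma sep (L : list P) :
  Forall (fun q => ~ (X q = vx /\ Y q = vy)) L ->
  (exists w1 w2, forall q, In q L -> wd w1 w2 q > 0) \/ hull_comb L.
Proof.
  induction L as [|q L IH]; intros HF.
  - left. exists 0, 0. intros q [].
  - inversion HF as [|? ? Hq HL]; subst.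
    destruct L as [|q' L0].
    { left. exists (vx - X q), (vy - Y q). intros q0 [<-|[]]. unfold wd.
      destruct (Req_dec (vx - X q) 0); destruct (Req_dec (vy - Y q) 0).
      - exfalso; apply Hq; split; lra.
      - nra. - nra. - nra. }
    set (L := q' :: L0) in *.
    destruct (IH HL) as [[w1 [w2 Hw]]|Hh].
    2:{ right. destruct Hh as [l [H1 H2]]. exists l. split; auto.
        eapply Forall_impl; [|exact H1]. intros [c p] [? ?]; split; simpl in *; auto. }
    destruct (Rlt_dec 0 (wd w1 w2 q)) as [Hpos|Hnpos].
    { left. exists w1, w2. intros q0 [<-|Hq0]; auto. }
    set (s0 := wd w1 w2 q).
    assert (Hs0 : s0 <= 0) by (unfold s0; lra).
    set (td := fun q0 => - w2 * (vx - X q0) + w1 * (vy - Y q0)).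
    set (tau := fun q0 => wd w1 w2 q0 * td q - s0 * td q0).
    assert (Hwne : ~ (w1 = 0 /\ w2 = 0)).
    { intros [-> ->]. specialize (Hw q' (or_introl eq_refl)). unfold wd in Hw. lra. }
    destruct (classic ((exists q1, In q1 L /\ tau q1 >= 0) /\ (exists q2, In q2 L /\ tau q2 <= 0)))
      as [[[q1 [Hq1 Ht1]] [q2 [Hq2 Ht2]]] | Hnot].
    +
      right.
      set (g1 := if Rlt_dec 0 (tau q1 - tau q2) then - tau q2 else 1).
      set (g2 := if Rlt_dec 0 (tau q1 - tau q2) then tau q1 else 0).
      assert (Hg : 0 <= g1 /\ 0 <= g2 /\ 0 < g1 + g2).
      { unfold g1, g2; destruct (Rlt_dec 0 (tau q1 - tau q2)); lra. }
      set (c0 := g1 * wd w1 w2 q1 + g2 * wd w1 w2 q2).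
      set (c1 := - g1 * s0). set (c2 := - g2 * s0).
      assert (Hw1 := Hw q1 Hq1). assert (Hw2 := Hw q2 Hq2).
      assert (Hc0 : 0 < c0).
      { unfold c0. destruct (Rlt_dec 0 g1).
        - assert (0 < g1 * wd w1 w2 q1) by (apply Rmult_lt_0_compat; lra).
          assert (0 <= g2 * wd w1 w2 q2) by (apply Rmult_le_pos; lra). lra.
        - assert (0 < g2 * wd w1 w2 q2) by (apply Rmult_lt_0_compat; lra).
          assert (0 <= g1 * wd w1 w2 q1) by (apply Rmult_le_pos; lra). lra. }
      assert (Hc1 : 0 <= c1) by (unfold c1; nra).
      assert (Hc2 : 0 <= c2) by (unfold c2; nra).
      set (C := c0 + c1 + c2).
      assert (HC : 0 < C) by (unfold C; lra).
      (* u = g1 z1 + g2 z2 where z = (w.d') d0 - s0 d' *)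
      set (u1 := c0 * (vx - X q) + c1 * (vx - X q1) + c2 * (vx - X q2)).
      set (u2 := c0 * (vy - Y q) + c1 * (vy - Y q1) + c2 * (vy - Y q2)).
      assert (Hu : u1 = 0 /\ u2 = 0).
      { apply (orth_zero w1 w2); auto.
        - unfold u1, u2, c0, c1, c2, s0, wd. ring.
        - assert (E : - w2 * u1 + w1 * u2 = g1 * tau q1 + g2 * tau q2).
          { unfold u1, u2, c0, c1, c2, tau, td, s0, wd. ring. }
          rewrite E. unfold g1, g2. destruct (Rlt_dec 0 (tau q1 - tau q2)).
          + ring.
          + assert (tau q1 = 0) by lra. assert (tau q2 = 0) by lra. nra. }
      destruct Hu as [Hu1 Hu2].
      exists [(c0 / C, q); (c1 / C, q1); (c2 / C, q2)].
      split; [|split; [|split]].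
      * repeat (apply Forall_cons; [simpl; split; [apply Rmult_le_pos; [lra| left; apply Rinv_0_lt_compat; lra]| simpl; auto]|]); apply Forall_nil.
      * simpl. field_simplify; [|lra]. unfold C. field. lra.
      * simpl. assert (E : c0 * X q + c1 * X q1 + c2 * X q2 = C * vx - u1)
          by (unfold u1, C; ring).
        replace (c0 / C * X q + (c1 / C * X q1 + (c2 / C * X q2 + 0)))
          with ((c0 * X q + c1 * X q1 + c2 * X q2) / C) by (field; lra).
        rewrite E, Hu1. field; lra.
      * simpl. assert (E : c0 * Y q + c1 * Y q1 + c2 * Y q2 = C * vy - u2)
          by (unfold u2, C; ring).
        replace (c0 / C * Y q + (c1 / C * Y q1 + (c2 / C * Y q2 + 0)))
          with ((c0 * Y q + c1 * Y q1 + c2 * Y q2) / C) by (field; lra).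
        rewrite E, Hu2. field; lra.
    +
      left.
      assert (HB : exists sg, (sg = 1 \/ sg = -1) /\ forall q0, In q0 L -> sg * tau q0 > 0).
      { destruct (classic (exists q1, In q1 L /\ tau q1 >= 0)) as [He|Hne].
        - exists 1. split; auto. intros q0 Hq0. destruct (Rlt_dec 0 (tau q0)); [lra|].
          exfalso. apply Hnot. split; auto. exists q0. split; auto; lra.
        - exists (-1). split; auto. intros q0 Hq0. destruct (Rlt_dec (tau q0) 0); [lra|].
          exfalso. apply Hne. exists q0. split; auto; lra. }
      destruct HB as [sg [Hsg Htau]].
      set (tdd := fun q0 => sg * td q0).
      assert (Key : forall q0, In q0 L -> wd w1 w2 q0 * tdd q - s0 * tdd q0 > 0).
      { intros q0 Hq0. specialize (Htau q0 Hq0). unfold tdd, tau in *. nra. }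
      destruct (Req_dec s0 0) as [Hz|Hnz].
      * assert (Htq : tdd q > 0).
        { specialize (Key q' (or_introl eq_refl)). specialize (Hw q' (or_introl eq_refl)).
          rewrite Hz in Key. nra. }
        destruct (my_exists_above (fun q0 => - tdd q0 / wd w1 w2 q0) L) as [lam Hlam].
        exists (- sg * w2 + lam * w1), (sg * w1 + lam * w2).
        intros q0 [<-|Hq0].
        -- assert (E : wd (- sg * w2 + lam * w1) (sg * w1 + lam * w2) q = tdd q + lam * s0).
           { unfold s0, tdd, td, wd. ring. }
           rewrite E, Hz. lra.
        -- assert (E : wd (- sg * w2 + lam * w1) (sg * w1 + lam * w2) q0 = tdd q0 + lam * wd w1 w2 q0).
           { unfold wd, tdd, td. ring. }
           rewrite E. specialize (Hlam q0 Hq0). simpl in Hlam.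
           apply div_lt_mult in Hlam; [|apply Hw; auto]. lra.
      * assert (Hs : s0 < 0) by lra.
        destruct (my_exists_between (fun q0 => - tdd q0 / wd w1 w2 q0) (tdd q / - s0) L) as [lam [HU Hlam]].
        { intros q0 Hq0. simpl. apply mult_lt_div; [apply Hw; auto|].
          specialize (Key q0 Hq0).
          replace (tdd q / - s0 * wd w1 w2 q0) with ((tdd q * wd w1 w2 q0) / (- s0)) by (field; lra).
          apply lt_div_of; [lra|]. nra. }
        exists (- sg * w2 + lam * w1), (sg * w1 + lam * w2).
        intros q0 [<-|Hq0].
        -- assert (E : wd (- sg * w2 + lam * w1) (sg * w1 + lam * w2) q = tdd q + lam * s0).
           { unfold s0, tdd, td, wd. ring. }
           rewrite E. apply lt_div_mult in HU; [|lra]. lra.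
        -- assert (E : wd (- sg * w2 + lam * w1) (sg * w1 + lam * w2) q0 = tdd q0 + lam * wd w1 w2 q0).
           { unfold wd, tdd, td. ring. }
           rewrite E. specialize (Hlam q0 Hq0). simpl in Hlam.
           apply div_lt_mult in Hlam; [|apply Hw; auto]. lra.
Qed.
End Sep.

Definition Cx_dec (z w : Cx) : {z = w} + {z <> w}.
Proof.
  destruct z as [x1 y1], w as [x2 y2].
  destruct (Req_EM_T x1 x2) as [->|H1]; [|right; congruence].
  destruct (Req_EM_T y1 y2) as [->|H2]; [left; reflexivity|right; congruence].
Defined.

Definition pdec (p q : nat * nat) : {p = q} + {p <> q}.
Proof. decide equality; apply Nat.eq_dec. Defined.

Definition grid (N : nat) := list_prod (seq 0 (S N)) (seq 0 (S N)).
Definition supp_list (a : nat -> nat -> Cx) (N : nat) :=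
  filter (fun p => if Cx_dec (a (fst p) (snd p)) C0 then false else true) (grid N).

Lemma supp_bound a N p : bounded_coefs a N -> support a p -> (fst p <= N)%nat /\ (snd p <= N)%nat.
Proof.
  intros Hb Hs. unfold support in Hs.
  destruct (le_lt_dec (fst p) N); destruct (le_lt_dec (snd p) N); auto;
  exfalso; apply Hs; apply Hb; auto.
Qed.

Lemma in_supp_list a N p : bounded_coefs a N -> (In p (supp_list a N) <-> support a p).
Proof.
  intros Hb. unfold supp_list. rewrite filter_In. split.
  - intros [_ H]. destruct (Cx_dec (a (fst p) (snd p)) C0); [discriminate|auto].
  - intros Hs. split.
    + destruct (supp_bound a N p Hb Hs) as [H1 H2]. destruct p as [i j]. unfold grid.
      apply in_prod; apply in_seq; simpl in *; lia.
    + destruct (Cx_dec (a (fst p) (snd p)) C0); [contradiction|auto].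
Qed.

Definition expo (a : nat -> nat -> Cx) (sg W e : Z) (v : nat * nat) : Prop :=
  forall q, support a q -> q <> v ->
  (sg * W * Z.of_nat (snd q) + e * Z.of_nat (fst q) <
   sg * W * Z.of_nat (snd v) + e * Z.of_nat (fst v))%Z.

Lemma vertex_real a N v : bounded_coefs a N -> newton_vertex a v ->
  exists w1 w2, forall q, support a q -> q <> v ->
    w1 * (INR (fst v) - INR (fst q)) + w2 * (INR (snd v) - INR (snd q)) > 0.
Proof.
  intros Hb [Hsv Hnv].
  set (L := filter (fun q => if pdec q v then false else true) (supp_list a N)).
  assert (HL : forall q, In q L <-> support a q /\ q <> v).
  { intros q. unfold L. rewrite filter_In, in_supp_list by auto.
    destruct (pdec q v); split; intros [? ?]; try discriminate; try contradiction; auto. }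
  destruct (sep (nat*nat) (fun q => INR (fst q)) (fun q => INR (snd q)) (INR (fst v)) (INR (snd v)) L)
    as [[w1 [w2 Hw]]|Hh].
  - apply Forall_forall. intros q Hq [E1 E2]. apply HL in Hq. destruct Hq as [_ Hq]. apply Hq.
    apply INR_eq in E1. apply INR_eq in E2. destruct q, v; simpl in *; congruence.
  - exists w1, w2. intros q Hq Hqv. apply (Hw q). apply HL; auto.
  - exfalso. apply Hnv. destruct Hh as [l [H1 [H2 [H3 H4]]]].
    exists l. split; [|split; [|split]]; auto.
    eapply Forall_impl; [|exact H1]. intros [c p] [Hc Hp]. split; auto. apply HL; auto.
Qed.

Lemma IZR_nat n : IZR (Z.of_nat n) = INR n.
Proof. rewrite INR_IZR_INZ. reflexivity. Qed.

Lemma absdiff_le N x y : (x <= N)%nat -> (y <= N)%nat -> Rabs (INR x - INR y) <= INR N.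
Proof.
  intros Hx Hy. apply Rabs_le. apply le_INR in Hx. apply le_INR in Hy.
  assert (0 <= INR x) by apply pos_INR. assert (0 <= INR y) by apply pos_INR. lra.
Qed.

Lemma vertex_int a N v : bounded_coefs a N -> newton_vertex a v ->
  exists sg, (sg = 1 \/ sg = -1)%Z /\ exists W0 : nat, forall W : nat, (W0 <= W)%nat ->
    exists e, expo a sg (Z.of_nat W) e v.
Proof.
  intros Hb Hv. destruct (vertex_real a N v Hb Hv) as [w1 [w2 Hw]].
  assert (Hsv : support a v) by (destruct Hv; auto).
  destruct (supp_bound a N v Hb Hsv) as [Hv1 Hv2].
  set (L := filter (fun q => if pdec q v then false else true) (supp_list a N)).
  assert (HL : forall q, In q L <-> support a q /\ q <> v).
  { intros q. unfold L. rewrite filter_In, in_supp_list by auto.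
    destruct (pdec q v); split; intros [? ?]; try discriminate; try contradiction; auto. }
  set (wd := fun w1 w2 (q : nat*nat) => w1 * (INR (fst v) - INR (fst q)) + w2 * (INR (snd v) - INR (snd q))).
  destruct (my_exists_between (fun q : nat*nat => - wd w1 w2 q) 0 L) as [lam [Hlam1 Hlam2]].
  { intros q Hq. apply HL in Hq. destruct Hq as [Hq1 Hq2]. specialize (Hw q Hq1 Hq2). unfold wd. lra. }
  set (m := - lam).
  assert (Hm : 0 < m) by (unfold m; lra).
  assert (Hwm : forall q, support a q -> q <> v -> wd w1 w2 q > m).
  { intros q H1 H2. assert (In q L) by (apply HL; auto). specialize (Hlam2 q H). unfold m. lra. }
  set (w2' := if Req_EM_T w2 0 then m / (2 * (INR N + 1)) else w2).
  assert (HN1 : 0 < INR N + 1) by (assert (0 <= INR N) by apply pos_INR; lra).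
  assert (Hw2' : w2' <> 0).
  { unfold w2'. destruct (Req_EM_T w2 0); auto.
    apply Rgt_not_eq. apply Rdiv_lt_0_compat; lra. }
  assert (Hwm' : forall q, support a q -> q <> v -> wd w1 w2' q > m / 2).
  { intros q H1 H2. specialize (Hwm q H1 H2). unfold w2'. destruct (Req_EM_T w2 0) as [E|E]; [|lra].
    destruct (supp_bound a N q Hb H1) as [Hq1 Hq2].
    assert (Hab := absdiff_le N _ _ Hv2 Hq2).
    unfold wd in *. rewrite E in Hwm.
    assert (Hp : 0 < m / (2 * (INR N + 1))) by (apply Rdiv_lt_0_compat; lra).
    assert (Hb2 : m / (2 * (INR N + 1)) * (INR (snd v) - INR (snd q)) >= - (m / (2 * (INR N + 1)) * INR N)).
    { assert (- INR N <= INR (snd v) - INR (snd q)) by (pose proof (Rle_abs (- (INR (snd v) - INR (snd q)))) as Hng; rewrite Rabs_Ropp in Hng; lra).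
      apply Rle_ge. replace (- (m / (2 * (INR N + 1)) * INR N)) with (m / (2 * (INR N + 1)) * (- INR N)) by ring.
      apply Rmult_le_compat_l; lra. }
    assert (Hb3 : m / (2 * (INR N + 1)) * INR N <= m / 2).
    { unfold Rdiv. apply Rmult_le_reg_r with (2 * (INR N + 1)); [lra|].
      replace (m * / (2 * (INR N + 1)) * INR N * (2 * (INR N + 1))) with (m * INR N) by (field; lra).
      replace (m * / 2 * (2 * (INR N + 1))) with (m * (INR N + 1)) by field. nra. }
    lra. }
  set (sg := if Rlt_dec 0 w2' then 1%Z else (-1)%Z).
  set (beta := Rabs w2').
  assert (Hbeta : 0 < beta) by (unfold beta; apply Rabs_pos_lt; auto).
  assert (Hsgb : w2' = IZR sg * beta).
  { unfold sg, beta. destruct (Rlt_dec 0 w2').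
    - rewrite Rabs_right by lra. simpl. ring.
    - rewrite Rabs_left by lra. simpl. ring. }
  exists sg. split; [unfold sg; destruct (Rlt_dec 0 w2'); auto|].
  set (lmb := w1 / beta). set (mu := m / 2 / beta).
  assert (Hmu : 0 < mu) by (unfold mu; apply Rdiv_lt_0_compat; lra).
  assert (Hphi : forall q, support a q -> q <> v ->
    lmb * (INR (fst v) - INR (fst q)) + IZR sg * (INR (snd v) - INR (snd q)) > mu).
  { intros q H1 H2. specialize (Hwm' q H1 H2). unfold wd in Hwm'. rewrite Hsgb in Hwm'.
    unfold lmb, mu. apply Rlt_gt. apply mult_lt_div; auto.
    replace ((w1 / beta * (INR (fst v) - INR (fst q)) + IZR sg * (INR (snd v) - INR (snd q))) * beta)
      with (w1 * (INR (fst v) - INR (fst q)) + IZR sg * beta * (INR (snd v) - INR (snd q))) by (field; lra).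
    lra. }
  destruct (INR_archimed mu (INR N) Hmu) as [W0 HW0].
  exists W0. intros W HW.
  exists (Int_part (INR W * lmb)).
  destruct (base_Int_part (INR W * lmb)) as [Hi1 Hi2].
  set (e := Int_part (INR W * lmb)) in *.
  set (dl := INR W * lmb - IZR e).
  assert (Hdl : 0 <= dl < 1) by (unfold dl; lra).
  intros q H1 H2.
  destruct (supp_bound a N q Hb H1) as [Hq1 Hq2].
  assert (Hab := absdiff_le N _ _ Hv1 Hq1).
  specialize (Hphi q H1 H2).
  apply Z.lt_0_sub.
  apply lt_IZR.
  rewrite minus_IZR, !plus_IZR, !mult_IZR, !IZR_nat.
  assert (HWle : INR W0 <= INR W) by (apply le_INR; auto).
  assert (HWp : 0 <= INR W) by apply pos_INR.
  assert (E : IZR sg * INR W * INR (snd v) + IZR e * INR (fst v) -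
      (IZR sg * INR W * INR (snd q) + IZR e * INR (fst q))
      = INR W * (lmb * (INR (fst v) - INR (fst q)) + IZR sg * (INR (snd v) - INR (snd q)))
        - dl * (INR (fst v) - INR (fst q))) by (unfold dl; ring).
  rewrite E.
  assert (T1 : INR W * (lmb * (INR (fst v) - INR (fst q)) + IZR sg * (INR (snd v) - INR (snd q))) >= INR W * mu).
  { apply Rle_ge. apply Rmult_le_compat_l; lra. }
  assert (T2 : INR W * mu > INR N).
  { assert (INR W0 * mu <= INR W * mu) by (apply Rmult_le_compat_r; lra). lra. }
  assert (T3 : dl * (INR (fst v) - INR (fst q)) <= INR N).
  { apply Rle_trans with (Rabs (dl * (INR (fst v) - INR (fst q)))); [apply Rle_abs|].
    rewrite Rabs_mult. rewrite (Rabs_right dl) by lra.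
    apply Rle_trans with (1 * Rabs (INR (fst v) - INR (fst q))).
    - apply Rmult_le_compat_r; [apply Rabs_pos|lra].
    - lra. }
  lra.
Qed.

Lemma middle_not_vertex a i1 i2 i3 J :
  support a (i1, J) -> support a (i3, J) -> (i1 < i2 < i3)%nat ->
  ~ newton_vertex a (i2, J).
Proof.
  intros H1 H3 Hi [_ Hnv]. apply Hnv.
  assert (L1 : INR i1 < INR i2) by (apply lt_INR; lia).
  assert (L2 : INR i2 < INR i3) by (apply lt_INR; lia).
  set (d := INR i3 - INR i1).
  exists [((INR i3 - INR i2) / d, (i1, J)); ((INR i2 - INR i1) / d, (i3, J))].
  split; [|split; [|split]].
  - repeat (apply Forall_cons; [simpl; split; [unfold d; apply Rmult_le_pos; [lra|left; apply Rinv_0_lt_compat; lra]|split; [auto| intro E; inversion E; lia]]|]).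
    apply Forall_nil.
  - simpl. unfold d. field. lra.
  - simpl. unfold d. field. lra.
  - simpl. unfold d. field. lra.
Qed.

Lemma three_same_j a p1 p2 p3 :
  newton_vertex a p1 -> newton_vertex a p2 -> newton_vertex a p3 ->
  p1 <> p2 -> p1 <> p3 -> p2 <> p3 -> snd p1 = snd p2 -> snd p2 = snd p3 -> False.
Proof.
  destruct p1 as [i1 j1], p2 as [i2 j2], p3 as [i3 j3]; simpl.
  intros V1 V2 V3 D12 D13 D23 E12 E23. subst j2 j3.
  assert (S1 : support a (i1, j1)) by (destruct V1; auto).
  assert (S2 : support a (i2, j1)) by (destruct V2; auto).
  assert (S3 : support a (i3, j1)) by (destruct V3; auto).
  assert (i1 <> i2) by (intro; subst; auto).
  assert (i1 <> i3) by (intro; subst; auto).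
  assert (i2 <> i3) by (intro; subst; auto).
  destruct (Nat.lt_total i1 i2) as [A|[A|A]]; [|lia|];
  destruct (Nat.lt_total i2 i3) as [B|[B|B]]; try lia;
  destruct (Nat.lt_total i1 i3) as [C|[C|C]]; try lia.
  - apply (middle_not_vertex a i1 i2 i3 j1); auto.
  - apply (middle_not_vertex a i1 i3 i2 j1); auto.
  - apply (middle_not_vertex a i3 i1 i2 j1); auto.
  - apply (middle_not_vertex a i2 i1 i3 j1); auto.
  - apply (middle_not_vertex a i2 i3 i1 j1); auto.
  - apply (middle_not_vertex a i3 i2 i1 j1); auto.
Qed.

Lemma at_most_two_j0 a l : NoDup l -> (forall p, In p l -> newton_vertex a p) ->
  (length (filter (fun p => Nat.eqb (snd p) 0) l) <= 2)%nat.
Proof.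
  intros Hnd Hv.
  assert (Hnd' := NoDup_filter (fun p => Nat.eqb (snd p) 0) Hnd).
  assert (Hin : forall p, In p (filter (fun p => Nat.eqb (snd p) 0) l) -> newton_vertex a p /\ snd p = 0%nat).
  { intros p Hp. apply filter_In in Hp. destruct Hp as [H1 H2]. split; auto. apply Nat.eqb_eq; auto. }
  destruct (filter (fun p => Nat.eqb (snd p) 0) l) as [|p1 [|p2 [|p3 t]]]; simpl; try lia.
  exfalso.
  inversion Hnd' as [|? ? N1 Hnd2]; subst. inversion Hnd2 as [|? ? N2 _]; subst.
  destruct (Hin p1) as [V1 J1]; [simpl; auto|].
  destruct (Hin p2) as [V2 J2]; [simpl; auto|].
  destruct (Hin p3) as [V3 J3]; [simpl; auto|].
  apply (three_same_j a p1 p2 p3); auto.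
  - intro E; subst; apply N1; simpl; auto.
  - intro E; subst; apply N1; simpl; auto.
  - intro E; subst; apply N2; simpl; auto.
  - congruence.
  - congruence.
Qed.

Lemma filter_split_length {A} (f : A -> bool) l :
  length l = (length (filter f l) + length (filter (fun x => negb (f x)) l))%nat.
Proof.
  induction l as [|x l IH]; simpl; auto. destruct (f x); simpl; lia.
Qed.

Lemma classify a N l : bounded_coefs a N -> NoDup l -> (forall p, In p l -> newton_vertex a p) ->
  exists U1 U2 W0, NoDup U1 /\ NoDup U2 /\ incl U1 l /\ incl U2 l /\
    (length U1 + length U2 = length l)%nat /\
    (forall v, In v U1 -> forall W, (W0 <= W)%nat -> exists e, expo a 1 (Z.of_nat W) e v) /\
    (forall v, In v U2 -> forall W, (W0 <= W)%nat -> exists e, expo a (-1) (Z.of_nat W) e v).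
Proof.
  intros Hb. induction l as [|v l IH]; intros Hnd Hv.
  - exists [], [], 0%nat. repeat split; try constructor; try (intros x []); simpl; auto.
  - inversion Hnd as [|? ? Hvl Hnd']; subst.
    destruct IH as [U1 [U2 [W0 [N1 [N2 [I1 [I2 [Hlen [E1 E2]]]]]]]]]; auto.
    { intros p Hp; apply Hv; simpl; auto. }
    destruct (vertex_int a N v Hb (Hv v (or_introl eq_refl))) as [sg [Hsg [W1 HW1]]].
    destruct Hsg as [->| ->].
    + exists (v :: U1), U2, (Nat.max W0 W1). repeat split.
      * constructor; auto.
      * auto.
      * intros x [<-|Hx]; simpl; auto.
      * intros x Hx; simpl; auto.
      * simpl. lia.
      * intros x [<-|Hx] W HW; [apply HW1; lia|apply E1; auto; lia].
      * intros x Hx W HW; apply E2; auto; lia.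
    + exists U1, (v :: U2), (Nat.max W0 W1). repeat split.
      * auto.
      * constructor; auto.
      * intros x Hx; simpl; auto.
      * intros x [<-|Hx]; simpl; auto.
      * simpl. lia.
      * intros x Hx W HW; apply E1; auto; lia.
      * intros x [<-|Hx] W HW; [apply HW1; lia|apply E2; auto; lia].
Qed.

Lemma expo_unique a sg W e v v' : expo a sg W e v -> expo a sg W e v' ->
  support a v -> support a v' -> v = v'.
Proof.
  intros H1 H2 S1 S2. destruct (pdec v v') as [E|E]; auto.
  specialize (H1 v' S2 (fun h => E (eq_sym h))). specialize (H2 v S1 E). lia.
Qed.

Lemma get_pairs {X Y} (P : X -> Y -> Prop) (U : list X) :
  (forall v, In v U -> exists e, P v e) ->
  exists L : list (X * Y), map fst L = U /\ Forall (fun ve => P (fst ve) (snd ve)) L.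
Proof.
  induction U as [|v U IH]; intros H.
  - exists []. split; auto.
  - destruct IH as [L [H1 H2]]. { intros; apply H; simpl; auto. }
    destruct (H v (or_introl eq_refl)) as [e He].
    exists ((v, e) :: L). split; simpl; [congruence|constructor; auto].
Qed.

Lemma nodup_snd {X Y} (L : list (X * Y)) :
  NoDup (map fst L) -> (forall x y, In x L -> In y L -> snd x = snd y -> fst x = fst y) ->
  NoDup (map snd L).
Proof.
  induction L as [|[v e] L IH]; intros H1 H2; simpl; constructor.
  - intros Hin. apply in_map_iff in Hin. destruct Hin as [[v' e'] [E Hin]]. simpl in E. subst e'.
    inversion H1 as [|? ? Hn _]; subst. apply Hn.
    assert (v' = v). { apply (H2 (v', e) (v, e)); simpl; auto. }
    subst. apply in_map_iff. exists (v, e); auto.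
  - apply IH. inversion H1; auto. intros; apply H2; simpl; auto.
Qed.

Lemma fst_unique {X Y} (L : list (X * Y)) v e e' :
  NoDup (map fst L) -> In (v, e) L -> In (v, e') L -> e = e'.
Proof.
  induction L as [|[v0 e0] L IH]; intros H1 H2 H3; [destruct H2|].
  inversion H1 as [|? ? Hn Hnd]; subst. simpl in *.
  destruct H2 as [E2|H2]; destruct H3 as [E3|H3].
  - congruence.
  - inversion E2; subst. exfalso; apply Hn. apply in_map_iff. exists (v, e'); auto.
  - inversion E3; subst. exfalso; apply Hn. apply in_map_iff. exists (v, e); auto.
  - eauto.
Qed.

Definition zrange (B : nat) : list Z :=
  map (fun n => (Z.of_nat n - Z.of_nat B)%Z) (seq 0 (S (2 * B))).

Lemma ss_seq (c : Z) len start :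
  StronglySorted Z.lt (map (fun n => (Z.of_nat n - c)%Z) (seq start len)).
Proof.
  revert start. induction len as [|len IH]; intros start; simpl; constructor; auto.
  apply Forall_forall. intros x Hx. apply in_map_iff in Hx. destruct Hx as [n [<- Hn]].
  apply in_seq in Hn. lia.
Qed.

Lemma ss_filter (f : Z -> bool) l : StronglySorted Z.lt l -> StronglySorted Z.lt (filter f l).
Proof.
  induction l as [|x l IH]; intros H; simpl; auto.
  inversion H as [|? ? H1 H2]; subst. destruct (f x); auto.
  constructor; auto. apply Forall_forall. intros y Hy. apply filter_In in Hy.
  destruct Hy as [Hy _]. eapply Forall_forall in H2; eauto.
Qed.

Lemma ss_nodup l : StronglySorted Z.lt l -> NoDup l.
Proof.
  induction l as [|x l IH]; intros H; constructor.
  - inversion H as [|? ? H1 H2]; subst. intro Hx. eapply Forall_forall in H2; eauto. lia.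
  - inversion H; auto.
Qed.

Lemma in_zrange B e : (Z.abs e <= Z.of_nat B)%Z -> In e (zrange B).
Proof.
  intros H. unfold zrange. apply in_map_iff. exists (Z.to_nat (e + Z.of_nat B)).
  split; [lia|]. apply in_seq. lia.
Qed.

Lemma bound_list (l : list Z) : exists B : nat, forall e, In e l -> (Z.abs e <= Z.of_nat B)%Z.
Proof.
  induction l as [|x l [B IH]].
  - exists 0%nat. intros e [].
  - exists (Nat.max B (Z.to_nat (Z.abs x))). intros e [<-|He]; [lia|]. specialize (IH e He). lia.
Qed.

Lemma sorted_items a (sg W : Z) (U : list (nat * nat)) :
  NoDup U -> (forall v, In v U -> support a v) ->
  (forall v, In v U -> exists e, expo a sg W e v) ->
  exists (S : list Z) (V : Z -> nat * nat),
    StronglySorted Z.lt S /\ length S = length U /\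
    (forall e, In e S -> In (V e) U /\ expo a sg W e (V e)) /\
    (forall e e', In e S -> In e' S -> e <> e' -> V e <> V e').
Proof.
  intros Hnd Hs Hex.
  destruct (get_pairs (fun v e => expo a sg W e v) U Hex) as [L [HL1 HL2]].
  rewrite Forall_forall in HL2.
  assert (HinU : forall ve, In ve L -> In (fst ve) U).
  { intros ve H. rewrite <- HL1. apply in_map; auto. }
  set (Es := map snd L).
  assert (HEs : NoDup Es).
  { apply nodup_snd. rewrite HL1; auto.
    intros x y Hx Hy Exy. apply (expo_unique a sg W (snd x)).
    - apply (HL2 x Hx).
    - rewrite Exy. apply (HL2 y Hy).
    - apply Hs, HinU; auto.
    - apply Hs, HinU; auto. }
  destruct (bound_list Es) as [B HB].
  set (S := filter (fun e => existsb (Z.eqb e) Es) (zrange B)).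
  set (V := fun e => match find (fun ve => Z.eqb (snd ve) e) L with Some ve => fst ve | None => (0%nat, 0%nat) end).
  assert (HSin : forall e, In e S <-> In e Es).
  { intros e. unfold S. rewrite filter_In. split.
    - intros [_ H]. apply existsb_exists in H. destruct H as [x [Hx Ex]]. apply Z.eqb_eq in Ex. subst; auto.
    - intros H. split; [apply in_zrange; auto|]. apply existsb_exists. exists e. split; auto. apply Z.eqb_refl. }
  assert (HV : forall e, In e Es -> In (V e, e) L).
  { intros e He. unfold V. destruct (find (fun ve => Z.eqb (snd ve) e) L) as [ve|] eqn:Ef.
    - apply find_some in Ef. destruct Ef as [H1 H2]. apply Z.eqb_eq in H2. subst e. destruct ve; auto.
    - exfalso. unfold Es in He. apply in_map_iff in He. destruct He as [ve [E Hve]].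
      eapply find_none in Ef; eauto. rewrite E, Z.eqb_refl in Ef. discriminate. }
  exists S, V. split; [|split; [|split]].
  - apply ss_filter. apply ss_seq.
  - assert (HSnd : NoDup S) by (apply ss_nodup, ss_filter, ss_seq).
    assert (length S <= length Es)%nat by (apply NoDup_incl_length; auto; intros x; apply HSin).
    assert (length Es <= length S)%nat by (apply NoDup_incl_length; auto; intros x; apply HSin).
    assert (length Es = length U) by (unfold Es; rewrite <- HL1, !length_map; auto). lia.
  - intros e He. apply HSin in He. apply HV in He. split.
    + apply (HinU _ He).
    + apply (HL2 _ He).
  - intros e e' He He' Hne E. apply HSin in He. apply HSin in He'.
    apply HV in He. apply HV in He'. rewrite E in He. apply Hne.
    apply (fst_unique L (V e')); auto. rewrite HL1; auto.
Qed.

Fixpoint cpairs {X} (g : X -> X -> R) (l : list X) : R :=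
  match l with
  | x :: ((y :: _) as t) => g x y + cpairs g t
  | _ => 0
  end.

Lemma cpairs_le {X} (g1 g2 : X -> X -> R) l :
  (forall e e', In e l -> In e' l -> g1 e e' <= g2 e e') -> cpairs g1 l <= cpairs g2 l.
Proof.
  induction l as [|x [|y t] IH]; intros H; simpl; try lra.
  simpl in IH. apply Rplus_le_compat.
  - apply H; simpl; auto.
  - apply IH. intros e e' He He'. apply H; simpl in *; tauto.
Qed.



Lemma count_pos (good : Z -> Z -> bool) l : StronglySorted Z.lt l ->
  (forall e e', In e l -> In e' l -> (e < e')%Z -> good e e' = false -> (e < 0 < e')%Z) ->
  List.Forall (fun e => (0 < e)%Z) l ->
  cpairs (fun e e' => if good e e' then 1 else 0) l >= INR (length l) - 1.
Proof.
  induction l as [|x [|y t] IH]; intros Hs Hg Hp.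
  - simpl. lra.
  - simpl. lra.
  - change (length (x :: y :: t)) with (S (length (y :: t))). rewrite S_INR.
    change (cpairs (fun e e' => if good e e' then 1 else 0) (x :: y :: t)) with
      ((if good x y then 1 else 0) + cpairs (fun e e' => if good e e' then 1 else 0) (y :: t)).
    inversion Hs as [|? ? Hs' Hf]; subst. inversion Hp as [|? ? Hx Hp']; subst.
    assert (Hxy : (x < y)%Z) by (inversion Hf; auto).
    destruct (good x y) eqn:G.
    + assert (IH' := IH Hs' (fun e e' He He' => Hg e e' (or_intror He) (or_intror He')) Hp'). lra.
    + exfalso. assert (H := Hg x y (or_introl eq_refl) (or_intror (or_introl eq_refl)) Hxy G). lia.
Qed.

Lemma count_good (good : Z -> Z -> bool) l : StronglySorted Z.lt l ->
  (forall e e', In e l -> In e' l -> (e < e')%Z -> good e e' = false -> (e < 0 < e')%Z) ->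
  cpairs (fun e e' => if good e e' then 1 else 0) l >= INR (length l) - 2.
Proof.
  induction l as [|x [|y t] IH]; intros Hs Hg.
  - simpl. lra.
  - simpl. lra.
  - change (length (x :: y :: t)) with (S (length (y :: t))). rewrite S_INR.
    change (cpairs (fun e e' => if good e e' then 1 else 0) (x :: y :: t)) with
      ((if good x y then 1 else 0) + cpairs (fun e e' => if good e e' then 1 else 0) (y :: t)).
    inversion Hs as [|? ? Hs' Hf]; subst.
    assert (Hxy : (x < y)%Z) by (inversion Hf; auto).
    destruct (good x y) eqn:G.
    + assert (IH' := IH Hs' (fun e e' He He' => Hg e e' (or_intror He) (or_intror He'))). lra.
    + assert (H := Hg x y (or_introl eq_refl) (or_intror (or_introl eq_refl)) Hxy G).
      assert (P : List.Forall (fun e => (0 < e)%Z) (y :: t)).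
      { constructor; [lia|]. inversion Hs' as [|? ? _ Hf']; subst.
        eapply Forall_impl; [|exact Hf']. intros z Hz; simpl in Hz; lia. }
      assert (C := count_pos good (y :: t) Hs' (fun e e' He He' => Hg e e' (or_intror He) (or_intror He')) P).
      lra.
Qed.

Lemma roots_exist (F : R -> R) (X : Z -> R) : continuity F ->
  (forall e e', (e < e')%Z -> X e < X e') ->
  forall l e, StronglySorted Z.lt (e :: l) -> exists roots : list R,
    NoDup roots /\ List.Forall (fun r => F r = 0) roots /\
    cpairs (fun e e' => if Rlt_dec (F (X e) * F (X e')) 0 then 1 else 0) (e :: l) <= INR (length roots) /\
    (forall r, In r roots -> X e < r).
Proof.
  intros HF HX. induction l as [|e' t IH]; intros e Hs.
  - exists []. split; [constructor|split; [constructor|split; [simpl; lra| intros r []]]].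
  - inversion Hs as [|? ? Hs' Hf]; subst.
    assert (Hee : (e < e')%Z) by (inversion Hf; auto).
    destruct (IH e' Hs') as [roots [N1 [N2 [N3 N4]]]].
    change (cpairs (fun e e' => if Rlt_dec (F (X e) * F (X e')) 0 then 1 else 0) (e :: e' :: t)) with
      ((if Rlt_dec (F (X e) * F (X e')) 0 then 1 else 0) +
       cpairs (fun e e' => if Rlt_dec (F (X e) * F (X e')) 0 then 1 else 0) (e' :: t)).
    assert (HXe := HX e e' Hee).
    destruct (Rlt_dec (F (X e) * F (X e')) 0) as [Hneg|Hnn].
    + destruct (IVT_cor F (X e) (X e') HF (Rlt_le _ _ HXe) (Rlt_le _ _ Hneg)) as [z [Hz1 Hz2]].
      assert (z <> X e) by (intro E; subst; rewrite Hz2 in Hneg; lra).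
      assert (z <> X e') by (intro E; subst; rewrite Hz2 in Hneg; lra).
      exists (z :: roots). split; [|split; [|split]].
      * constructor; auto. intro Hin. specialize (N4 z Hin). lra.
      * constructor; auto.
      * simpl length. rewrite S_INR. lra.
      * intros r [<-|Hr]; [lra|]. specialize (N4 r Hr). lra.
    + exists roots. split; [|split; [|split]]; auto.
      * lra.
      * intros r Hr. specialize (N4 r Hr). lra.
Qed.

Lemma polar A B : ~ (A = 0 /\ B = 0) ->
  exists phi, A = sqrt (A*A + B*B) * cos phi /\ B = sqrt (A*A + B*B) * sin phi.
Proof.
  intros H. set (r := sqrt (A*A + B*B)).
  assert (Hr2 : r * r = A*A + B*B) by (unfold r; apply sqrt_sqrt; nra).
  assert (Hr : 0 < r).
  { unfold r. apply sqrt_lt_R0. destruct (Req_dec A 0); destruct (Req_dec B 0); try tauto; nra. }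
  set (x := A / r).
  assert (Hx : -1 <= x <= 1).
  { unfold x. assert (A*A <= r*r) by nra. split.
    - apply Rmult_le_reg_r with r; auto. unfold Rdiv. rewrite Rmult_assoc, Rinv_l by lra. nra.
    - apply Rmult_le_reg_r with r; auto. unfold Rdiv. rewrite Rmult_assoc, Rinv_l by lra. nra. }
  assert (Hs : sqrt (1 - x²) = Rabs B / r).
  { assert (E : 1 - x² = (Rabs B / r)²).
    { unfold Rsqr, x. replace (Rabs B / r * (Rabs B / r)) with (Rabs B * Rabs B / (r*r)) by (field; lra).
      rewrite <- Rabs_mult. rewrite Rabs_right by nra.
      replace (1 - A / r * (A / r)) with ((r*r - A*A)/(r*r)) by (field; lra). rewrite Hr2. field. nra. }
    rewrite E. apply sqrt_Rsqr. apply Rmult_le_pos; [apply Rabs_pos|left; apply Rinv_0_lt_compat; lra]. }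
  destruct (Rle_dec 0 B) as [HB|HB].
  - exists (acos x). rewrite cos_acos, sin_acos by auto. rewrite Hs, Rabs_right by lra.
    fold r. unfold x. split; field; lra.
  - exists (- acos x). rewrite cos_neg, sin_neg, cos_acos, sin_acos by auto. rewrite Hs, Rabs_left by lra.
    fold r. unfold x. split; field; lra.
Qed.

Module Fourier.
Import Coquelicot.Coquelicot.

Lemma int_cos (n : nat) (psi : R) : (1 <= n)%nat ->
  is_RInt (fun t => cos (INR n * t + psi)) 0 (2*PI) 0.
Proof.
  intros Hn.
  assert (Hn' : INR n <> 0) by (apply not_0_INR; lia).
  assert (H := is_RInt_derive (fun t => sin (INR n * t + psi) / INR n)
                  (fun t => cos (INR n * t + psi)) 0 (2*PI)). cbv beta in H.
  match type of H with context [is_RInt _ _ _ ?v] =>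
    assert (E : v = 0); [|rewrite E in H] end.
  { unfold minus, plus, opp; simpl.
    replace (INR n * (2 * PI) + psi) with (psi + 2 * INR n * PI) by ring.
    rewrite sin_period. replace (INR n * 0 + psi) with psi by ring. field; auto. }
  apply H.
  + intros x _. auto_derive; auto. field; auto.
  + assert (Hc : forall x, continuous (fun t : R => cos (INR n * t + psi)) x).
    { intros x. apply (ex_derive_continuous (K:=R_AbsRing) (V:=R_NormedModule)). auto_derive; auto. }
    intros x _. exact (Hc x).
Qed.

Lemma is_RInt_addk (f g : R -> R) (If k : R) :
  is_RInt f 0 (2*PI) If -> is_RInt g 0 (2*PI) 0 ->
  is_RInt (fun t => f t + k * g t) 0 (2*PI) If.
Proof.
  intros Hf Hg.
  assert (H := is_RInt_plus f (fun t => scal k (g t)) 0 (2*PI) If (scal k 0) Hf (is_RInt_scal _ _ _ _ _ Hg)).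
  match type of H with context [is_RInt _ _ _ ?v] =>
    assert (E : v = If); [|rewrite E in H] end.
  { unfold plus, scal; simpl. unfold mult; simpl. ring. }
  eapply is_RInt_ext; [|exact H]. intros x _. reflexivity.
Qed.

Lemma freq_diff (j j' : nat) (phi phi' : R) : j <> j' ->
  exists n psi, (1 <= n)%nat /\ forall t,
    cos ((INR j * t + phi) - (INR j' * t + phi')) = cos (INR n * t + psi).
Proof.
  intros Hj. destruct (Nat.lt_ge_cases j' j) as [H|H].
  - exists (j - j')%nat, (phi - phi'). split; [lia|]. intros t.
    rewrite minus_INR by lia. f_equal. ring.
  - exists (j' - j)%nat, (phi' - phi). split; [lia|]. intros t.
    rewrite minus_INR by lia. rewrite <- cos_neg. f_equal. ring.
Qed.

Lemma cos_cos x y : cos x * cos y = (cos (x + y) + cos (x - y)) / 2.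
Proof. rewrite cos_plus, cos_minus. field. Qed.

Lemma cos_sq x : cos x * cos x = (1 + cos (2 * x)) / 2.
Proof.
  replace (2 * x) with (x + x) by ring. rewrite cos_plus.
  assert (H := sin2_cos2 x). unfold Rsqr in H. lra.
Qed.

Lemma int_Q (j j' : nat) (phi phi' : R) :
  (1 <= j)%nat -> (1 <= j')%nat -> j <> j' ->
  is_RInt (fun t => let Q := cos (INR j * t + phi) * cos (INR j' * t + phi') in (Q * Q - Q) / 2)
    0 (2*PI) (PI / 4).
Proof.
  intros H1 H2 H3.
  destruct (freq_diff j j' phi phi' H3) as [n1 [psi1 [Hn1 E1]]].
  destruct (freq_diff (2*j) (2*j') (2*phi) (2*phi')) as [n2 [psi2 [Hn2 E2]]]; [lia|].
  set (c := fun n psi t => cos (INR n * t + psi)).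
  assert (I0 : is_RInt (fun _ => 1/8) 0 (2*PI) (PI/4)).
  { assert (H := is_RInt_const 0 (2*PI) (1/8)).
    match type of H with context [is_RInt _ _ _ ?v] =>
      assert (E : v = PI/4); [|rewrite E in H] end; auto.
    unfold scal; simpl; unfold mult; simpl. field. }
  assert (Hc : forall n psi, (1 <= n)%nat -> is_RInt (c n psi) 0 (2*PI) 0).
  { intros. apply int_cos; auto. }
  assert (G := is_RInt_addk _ _ _ (1/8) I0 (Hc (2*j)%nat (2*phi) ltac:(lia))).
  assert (G2 := is_RInt_addk _ _ _ (1/8) G (Hc (2*j')%nat (2*phi') ltac:(lia))).
  assert (G3 := is_RInt_addk _ _ _ (1/16) G2 (Hc (2*j+2*j')%nat (2*phi+2*phi') ltac:(lia))).
  assert (G4 := is_RInt_addk _ _ _ (1/16) G3 (Hc n2 psi2 Hn2)).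
  assert (G5 := is_RInt_addk _ _ _ (-1/4) G4 (Hc (j+j')%nat (phi+phi') ltac:(lia))).
  assert (G6 := is_RInt_addk _ _ _ (-1/4) G5 (Hc n1 psi1 Hn1)).
  eapply is_RInt_ext; [|exact G6].
  intros t _. unfold c. cbv zeta.
  rewrite <- E1, <- E2.
  set (X := INR j * t + phi). set (Y := INR j' * t + phi').
  assert (EX : INR (2 * j) * t + 2 * phi = 2 * X) by (unfold X; rewrite mult_INR; simpl; ring).
  assert (EY : INR (2 * j') * t + 2 * phi' = 2 * Y) by (unfold Y; rewrite mult_INR; simpl; ring).
  assert (EXY : INR (2 * j + 2 * j') * t + (2 * phi + 2 * phi') = 2 * X + 2 * Y)
    by (unfold X, Y; rewrite plus_INR, !mult_INR; simpl; ring).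
  assert (EXY2 : INR (2 * j) * t + 2 * phi - (INR (2 * j') * t + 2 * phi') = 2 * X - 2 * Y)
    by (rewrite EX, EY; ring).
  assert (EXY3 : INR (j + j') * t + (phi + phi') = X + Y)
    by (unfold X, Y; rewrite plus_INR; ring).
  rewrite EX, EY, EXY, EXY3.
  fold X Y.
  replace (cos X * cos Y * (cos X * cos Y)) with ((cos X * cos X) * (cos Y * cos Y)) by ring.
  rewrite !cos_sq.
  replace ((1 + cos (2 * X)) / 2 * ((1 + cos (2 * Y)) / 2))
    with ((1 + cos (2*X) + cos (2*Y) + cos (2*X) * cos (2*Y)) / 4) by field.
  rewrite (cos_cos (2*X) (2*Y)), (cos_cos X Y). match goal with |- ?a = ?b => change (@eq R a b) end. field.
Qed.

Lemma cpairs_RInt {X} (g : X -> X -> R -> R) (I : X -> X -> R) l :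
  (forall e e', In e l -> In e' l -> is_RInt (g e e') 0 (2*PI) (I e e')) ->
  is_RInt (fun t => cpairs (fun e e' => g e e' t) l) 0 (2*PI) (cpairs I l).
Proof.
  induction l as [|x [|y t] IH]; intros H.
  - simpl. assert (Hc := is_RInt_const 0 (2*PI) 0).
    match type of Hc with context [is_RInt _ _ _ ?v] =>
      assert (E : v = 0); [|rewrite E in Hc] end.
    { unfold scal; simpl; unfold mult; simpl; ring. }
    exact Hc.
  - simpl. assert (Hc := is_RInt_const 0 (2*PI) 0).
    match type of Hc with context [is_RInt _ _ _ ?v] =>
      assert (E : v = 0); [|rewrite E in Hc] end.
    { unfold scal; simpl; unfold mult; simpl; ring. }
    exact Hc.
  - assert (H1 := H x y (or_introl eq_refl) (or_intror (or_introl eq_refl))).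
    assert (H2 : is_RInt (fun z => cpairs (fun e e' => g e e' z) (y :: t)) 0 (2*PI) (cpairs I (y :: t))).
    { apply IH. intros e e' He He'. apply H; simpl in *; tauto. }
    assert (H3 := is_RInt_plus _ _ _ _ _ _ H1 H2).
    change (cpairs I (x :: y :: t)) with (plus (I x y) (cpairs I (y :: t))).
    eapply is_RInt_ext; [|exact H3]. intros z _. reflexivity.
Qed.

Section F.
Variables (Af Bf : Z -> R) (Jf : Z -> nat).

Definition cth e t := Af e * cos (INR (Jf e) * t) - Bf e * sin (INR (Jf e) * t).
Definition rr e := sqrt (Af e * Af e + Bf e * Bf e).
Definition Qf e e' t := cth e t * cth e' t / (rr e * rr e').
Definition goodb e e' := negb (Nat.eqb (Jf e) (Jf e')).
Definition hq e e' t := if goodb e e' then (Qf e e' t * Qf e e' t - Qf e e' t) / 2 else 0.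

Lemma cth_polar e : ~ (Af e = 0 /\ Bf e = 0) -> exists phi, 0 < rr e /\
  forall t, cth e t = rr e * cos (INR (Jf e) * t + phi).
Proof.
  intros H. destruct (polar _ _ H) as [phi [E1 E2]]. exists phi. split.
  - unfold rr. apply sqrt_lt_R0. destruct (Req_dec (Af e) 0); destruct (Req_dec (Bf e) 0); try tauto; nra.
  - intros t. unfold cth, rr. set (r := sqrt (Af e * Af e + Bf e * Bf e)) in *.
    rewrite E1, E2, cos_plus. ring.
Qed.

Lemma hq_int e e' : (1 <= Jf e)%nat -> (1 <= Jf e')%nat ->
  ~ (Af e = 0 /\ Bf e = 0) -> ~ (Af e' = 0 /\ Bf e' = 0) ->
  is_RInt (hq e e') 0 (2*PI) (if goodb e e' then PI / 4 else 0).
Proof.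
  intros J1 J2 N1 N2. unfold hq.
  destruct (goodb e e') eqn:G.
  - unfold goodb in G. apply Bool.negb_true_iff in G. apply Nat.eqb_neq in G.
    destruct (cth_polar e N1) as [phi [Hr H]]. destruct (cth_polar e' N2) as [phi' [Hr' H']].
    eapply is_RInt_ext; [|apply (int_Q (Jf e) (Jf e') phi phi' J1 J2 G)].
    intros t _. cbv zeta. unfold Qf. rewrite H, H'.
    match goal with |- ?a = ?b => change (@eq R a b) end. field. lra.
  - assert (Hc := is_RInt_const 0 (2*PI) 0).
    match type of Hc with context [is_RInt _ _ _ ?v] =>
      assert (E : v = 0); [|rewrite E in Hc] end.
    { unfold scal; simpl; unfold mult; simpl; ring. }
    exact Hc.
Qed.

Lemma Q_bound e e' t : ~ (Af e = 0 /\ Bf e = 0) -> ~ (Af e' = 0 /\ Bf e' = 0) ->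
  -1 <= Qf e e' t <= 1 /\ (0 <= Qf e e' t <-> 0 <= cth e t * cth e' t).
Proof.
  intros N1 N2. destruct (cth_polar e N1) as [phi [Hr H]]. destruct (cth_polar e' N2) as [phi' [Hr' H']].
  unfold Qf. rewrite H, H'.
  replace (rr e * cos (INR (Jf e) * t + phi) * (rr e' * cos (INR (Jf e') * t + phi')) / (rr e * rr e'))
    with (cos (INR (Jf e) * t + phi) * cos (INR (Jf e') * t + phi')) by (field; lra).
  assert (C1 := COS_bound (INR (Jf e) * t + phi)).
  assert (C2 := COS_bound (INR (Jf e') * t + phi')).
  set (c1 := cos (INR (Jf e) * t + phi)) in *. set (c2 := cos (INR (Jf e') * t + phi')) in *.
  split; [split; nra|].
  replace (rr e * c1 * (rr e' * c2)) with ((rr e * rr e') * (c1 * c2)) by ring.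
  assert (0 < rr e * rr e') by (apply Rmult_lt_0_compat; auto).
  split; intros; nra.
Qed.

Lemma hq_le e e' t : ~ (Af e = 0 /\ Bf e = 0) -> ~ (Af e' = 0 /\ Bf e' = 0) ->
  hq e e' t <= (if Rlt_dec (cth e t * cth e' t) 0 then 1 else 0).
Proof.
  intros N1 N2. destruct (Q_bound e e' t N1 N2) as [[B1 B2] B3]. unfold hq.
  destruct (goodb e e'); destruct (Rlt_dec (cth e t * cth e' t) 0) as [L|L].
  - nra.
  - assert (0 <= Qf e e' t) by (apply B3; lra). nra.
  - lra.
  - lra.
Qed.

Lemma fourier (S : list Z) :
  (forall e, In e S -> (1 <= Jf e)%nat /\ ~ (Af e = 0 /\ Bf e = 0)) ->
  0 < cpairs (fun e e' => if goodb e e' then 1 else 0) S ->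
  exists t, cpairs (fun e e' => if Rlt_dec (cth e t * cth e' t) 0 then 1 else 0) S >
            cpairs (fun e e' => if goodb e e' then 1 else 0) S / 16.
Proof.
  intros HS Hpos.
  set (ng := cpairs (fun e e' => if goodb e e' then 1 else 0) S).
  assert (HI : is_RInt (fun t => cpairs (fun e e' => hq e e' t) S) 0 (2*PI)
                 (cpairs (fun e e' => if goodb e e' then PI/4 else 0) S)).
  { apply (cpairs_RInt hq). intros e e' He He'.
    destruct (HS e He), (HS e' He'). apply hq_int; auto. }
  assert (E : cpairs (fun e e' => if goodb e e' then PI/4 else 0) S = ng * (PI/4)).
  { unfold ng. clear. induction S as [|x [|y t] IH]; simpl; try ring.
    simpl in IH. rewrite IH. destruct (goodb x y); ring. }
  rewrite E in HI.
  destruct (classic (exists t, cpairs (fun e e' => hq e e' t) S > ng / 16)) as [[t Ht]|Hn].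
  - exists t. eapply Rlt_le_trans; [exact Ht|]. apply cpairs_le.
    intros e e' He He'. destruct (HS e He), (HS e' He'). apply hq_le; auto.
  - exfalso.
    assert (Hc := is_RInt_const 0 (2*PI) (ng/16)).
    match type of Hc with context [is_RInt _ _ _ ?v] =>
      assert (E2 : v = ng * PI / 8); [|rewrite E2 in Hc] end.
    { unfold scal; simpl; unfold mult; simpl; field. }
    assert (Hle := is_RInt_le _ _ 0 (2*PI) _ _ ltac:(assert (Hp := PI_RGT_0); lra) HI Hc).
    assert (Hle' : ng * (PI / 4) <= ng * PI / 8).
    { apply Hle. intros t _. destruct (Rle_dec (cpairs (fun e e' => hq e e' t) S) (ng/16)); auto.
      exfalso; apply Hn. exists t. lra. }
    assert (Hp := PI_RGT_0). fold ng in Hpos. nra.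
Qed.
End F.
End Fourier.

Lemma Cpow_polar rho t j :
  Cpow (rho * cos t, rho * sin t) j = (rho ^ j * cos (INR j * t), rho ^ j * sin (INR j * t)).
Proof.
  induction j as [|j IH].
  - simpl. rewrite Rmult_0_l, cos_0, sin_0. f_equal; ring.
  - simpl Cpow. rewrite IH. unfold Cmul; simpl fst; simpl snd.
    rewrite S_INR. replace ((INR j + 1) * t) with (t + INR j * t) by ring.
    rewrite cos_plus, sin_plus. f_equal; simpl; ring.
Qed.

Lemma Re_csum f n : Re (csum f n) = sum_f_R0 (fun j => Re (f j)) n.
Proof.
  induction n as [|n IH]; simpl; auto. unfold Re, Cadd in *; simpl. rewrite IH. auto.
Qed.

Definition cij (a : nat -> nat -> Cx) t i j :=
  fst (a i j) * cos (INR j * t) - snd (a i j) * sin (INR j * t).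

Lemma re_eval_formula a N rho t x :
  re_eval a N (rho * cos t, rho * sin t) x =
  sum_f_R0 (fun i => sum_f_R0 (fun j => rho ^ j * cij a t i j * x ^ i) N) N.
Proof.
  unfold re_eval, coef_at. apply sum_eq. intros i _.
  rewrite Re_csum. rewrite Rmult_comm, scal_sum. apply sum_eq. intros j _.
  rewrite Cpow_polar. unfold Re, Cmul, cij; simpl. ring.
Qed.

Lemma sum_bound s n B : (forall i, (i <= n)%nat -> Rabs (s i) <= B) ->
  Rabs (sum_f_R0 s n) <= INR (S n) * B.
Proof.
  induction n as [|n IH]; intros H.
  - simpl. rewrite Rmult_1_l. apply H; lia.
  - simpl sum_f_R0. rewrite S_INR.
    eapply Rle_trans; [apply Rabs_triang|].
    assert (H1 := IH (fun i Hi => H i ltac:(lia))). assert (H2 := H (S n) ltac:(lia)). lra.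
Qed.

Lemma sum_bound1 s n iv B : (iv <= n)%nat -> (forall i, (i <= n)%nat -> i <> iv -> Rabs (s i) <= B) ->
  Rabs (sum_f_R0 s n - s iv) <= INR n * B.
Proof.
  induction n as [|n IH]; intros Hiv H.
  - simpl. assert (iv = 0%nat) by lia. subst. replace (s 0%nat - s 0%nat) with 0 by ring.
    rewrite Rabs_R0. lra.
  - simpl sum_f_R0. rewrite S_INR.
    destruct (Nat.eq_dec iv (S n)) as [E|E].
    + subst. replace (sum_f_R0 s n + s (S n) - s (S n)) with (sum_f_R0 s n) by ring.
      assert (H1 := sum_bound s n B (fun i Hi => H i ltac:(lia) ltac:(lia))). rewrite S_INR in H1. lra.
    + replace (sum_f_R0 s n + s (S n) - s iv) with ((sum_f_R0 s n - s iv) + s (S n)) by ring.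
      eapply Rle_trans; [apply Rabs_triang|].
      assert (H1 := IH ltac:(lia) (fun i Hi Hne => H i ltac:(lia) Hne)).
      assert (H2 := H (S n) ltac:(lia) ltac:(lia)). lra.
Qed.

Lemma double_dom (tt : nat -> nat -> R) N iv jv B : (iv <= N)%nat -> (jv <= N)%nat -> 0 <= B ->
  (forall i j, (i <= N)%nat -> (j <= N)%nat -> (i, j) <> (iv, jv) -> Rabs (tt i j) <= B) ->
  Rabs (sum_f_R0 (fun i => sum_f_R0 (fun j => tt i j) N) N - tt iv jv) <= (INR N + 1) * (INR N + 1) * B.
Proof.
  intros Hi Hj HB H.
  assert (H1 : Rabs (sum_f_R0 (fun i => sum_f_R0 (fun j => tt i j) N) N - sum_f_R0 (fun j => tt iv j) N)
              <= INR N * (INR (S N) * B)).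
  { apply (sum_bound1 (fun i => sum_f_R0 (fun j => tt i j) N) N iv); auto.
    intros i Hi' Hne. apply sum_bound. intros j Hj'. apply H; auto. intro E; inversion E; auto. }
  assert (H2 : Rabs (sum_f_R0 (fun j => tt iv j) N - tt iv jv) <= INR N * B).
  { apply (sum_bound1 (fun j => tt iv j) N jv); auto.
    intros j Hj' Hne. apply H; auto. intro E; inversion E; auto. }
  rewrite S_INR in H1.
  replace (sum_f_R0 (fun i => sum_f_R0 (fun j => tt i j) N) N - tt iv jv) with
    ((sum_f_R0 (fun i => sum_f_R0 (fun j => tt i j) N) N - sum_f_R0 (fun j => tt iv j) N) +
     (sum_f_R0 (fun j => tt iv j) N - tt iv jv)) by ring.
  eapply Rle_trans; [apply Rabs_triang|].
  assert (0 <= INR N) by apply pos_INR. nra.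
Qed.

Lemma powerRZ_pow T z n : T <> 0 -> powerRZ T z ^ n = powerRZ T (z * Z.of_nat n).
Proof.
  intros HT. induction n as [|n IH].
  - simpl. rewrite Z.mul_0_r. reflexivity.
  - simpl pow. rewrite IH, <- powerRZ_add by auto. f_equal. lia.
Qed.

Lemma powerRZ_ge1 T d : 1 <= T -> (0 <= d)%Z -> 1 <= powerRZ T d.
Proof.
  intros HT Hd. replace d with (Z.of_nat (Z.to_nat d)) by lia.
  rewrite <- pow_powerRZ. apply pow_R1_Rle; auto.
Qed.

Lemma powerRZ_mono T g G : 1 <= T -> (g <= G)%Z -> powerRZ T g <= powerRZ T G.
Proof.
  intros HT Hg. replace G with (g + (G - g))%Z by lia.
  rewrite powerRZ_add by lra.
  assert (H1 := powerRZ_ge1 T (G - g) HT ltac:(lia)).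
  assert (H2 := powerRZ_lt T g ltac:(lra)). nra.
Qed.

Lemma powerRZ_strict T g G : 1 < T -> (g < G)%Z -> powerRZ T g < powerRZ T G.
Proof.
  intros HT Hg. replace G with ((g + 1) + (G - g - 1))%Z by lia.
  rewrite !powerRZ_add by lra.
  assert (H1 := powerRZ_ge1 T (G - g - 1) ltac:(lra) ltac:(lia)).
  assert (H2 := powerRZ_lt T g ltac:(lra)).
  change (powerRZ T 1) with (T * 1).
  set (X := powerRZ T (G - g - 1)) in *. set (Y := powerRZ T g) in *.
  assert (1 < T * 1 * X) by nra.
  replace (Y * (T * 1) * X) with (Y * (T * 1 * X)) by ring.
  rewrite <- (Rmult_1_r Y) at 1. apply Rmult_lt_compat_l; lra.
Qed.

Lemma item_sign a N sg W e v t T A :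
  bounded_coefs a N -> support a v -> expo a sg W e v -> 1 < T -> 0 <= A ->
  (forall i j, (i <= N)%nat -> (j <= N)%nat -> Rabs (fst (a i j)) + Rabs (snd (a i j)) <= A) ->
  (INR N + 1) * (INR N + 1) * A < Rabs (cij a t (fst v) (snd v)) * T ->
  re_eval a N (powerRZ T (sg * W) * cos t, powerRZ T (sg * W) * sin t) (powerRZ T e)
    * cij a t (fst v) (snd v) > 0.
Proof.
  intros Hb Hs He HT HA HAb Hc.
  destruct (supp_bound a N v Hb Hs) as [Hv1 Hv2].
  rewrite re_eval_formula.
  set (g := fun i j => (sg * W * Z.of_nat j + e * Z.of_nat i)%Z).
  set (G := g (fst v) (snd v)).
  set (P := powerRZ T (G - 1)).
  assert (HP : 0 < P) by (apply powerRZ_lt; lra).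
  assert (Ht : forall i j, powerRZ T (sg * W) ^ j * cij a t i j * powerRZ T e ^ i = cij a t i j * powerRZ T (g i j)).
  { intros i j. rewrite !powerRZ_pow by lra. unfold g. rewrite powerRZ_add by lra. ring. }
  assert (Hcb : forall i j, (i <= N)%nat -> (j <= N)%nat -> Rabs (cij a t i j) <= A).
  { intros i j Hi Hj. unfold cij. unfold Rminus. eapply Rle_trans; [apply Rabs_triang|].
    assert (H := HAb i j Hi Hj). rewrite Rabs_Ropp, !Rabs_mult.
    assert (C1 := COS_bound (INR j * t)). assert (C2 := SIN_bound (INR j * t)).
    assert (Rabs (cos (INR j * t)) <= 1) by (apply Rabs_le; lra).
    assert (Rabs (sin (INR j * t)) <= 1) by (apply Rabs_le; lra).
    assert (0 <= Rabs (fst (a i j))) by apply Rabs_pos.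
    assert (0 <= Rabs (snd (a i j))) by apply Rabs_pos.
    assert (0 <= Rabs (cos (INR j * t))) by apply Rabs_pos.
    assert (0 <= Rabs (sin (INR j * t))) by apply Rabs_pos.
    nra. }
  erewrite sum_eq; [|intros i _; apply sum_eq; intros j _; apply Ht].
  assert (HD := double_dom (fun i j => cij a t i j * powerRZ T (g i j)) N (fst v) (snd v) (A * P)
                  Hv1 Hv2 ltac:(nra)).
  assert (HD' : Rabs (sum_f_R0 (fun i => sum_f_R0 (fun j => cij a t i j * powerRZ T (g i j)) N) N
                 - cij a t (fst v) (snd v) * powerRZ T G) <= (INR N + 1) * (INR N + 1) * (A * P)).
  { apply HD. intros i j Hi Hj Hne. rewrite Rabs_mult.
    destruct (Cx_dec (a i j) C0) as [Z0|NZ].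
    - assert (cij a t i j = 0) by (unfold cij; rewrite Z0; simpl; ring).
      rewrite H, Rabs_R0. nra.
    - assert (Hg : (g i j <= G - 1)%Z).
      { assert (Hq : (i, j) <> v) by (destruct v; simpl in *; auto).
        specialize (He (i, j) NZ Hq). unfold G, g. simpl in He. lia. }
      rewrite (Rabs_right (powerRZ T (g i j))) by (apply Rle_ge, powerRZ_le; lra).
      apply Rmult_le_compat; [apply Rabs_pos|apply powerRZ_le; lra|auto|].
      apply powerRZ_mono; auto; lra. }
  set (F := sum_f_R0 (fun i => sum_f_R0 (fun j => cij a t i j * powerRZ T (g i j)) N) N) in *.
  set (c := cij a t (fst v) (snd v)) in *.
  assert (EG : powerRZ T G = T * P).
  { unfold P. replace G with (1 + (G - 1))%Z at 1 by lia. rewrite powerRZ_add by lra. simpl. ring. }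
  rewrite EG in HD'.
  set (K := (INR N + 1) * (INR N + 1) * A) in *.
  assert (HK : K * P < Rabs c * T * P) by (apply Rmult_lt_compat_r; auto).
  assert (HD2 : Rabs (F - c * (T * P)) <= K * P) by (unfold K; replace ((INR N + 1) * (INR N + 1) * A * P) with ((INR N + 1) * (INR N + 1) * (A * P)) by ring; exact HD').
  assert (HK0 : 0 <= K) by (unfold K; assert (0 <= INR N) by apply pos_INR; apply Rmult_le_pos; [nra|auto]).
  assert (HKP : 0 <= K * P) by nra.
  destruct (Rle_dec 0 c) as [Hc0|Hc0].
  - rewrite Rabs_right in HK by lra.
    assert (Hl := Rle_abs (- (F - c * (T * P)))). rewrite Rabs_Ropp in Hl.
    assert (Hcp : 0 < c) by (destruct (Req_dec c 0) as [E|E]; [rewrite E in HK; nra|lra]).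
    assert (HF : 0 < F) by nra.
    apply Rmult_lt_0_compat; auto.
  - rewrite Rabs_left in HK by lra.
    assert (Hl := Rle_abs (F - c * (T * P))).
    assert (HF : F < 0) by nra.
    nra.
Qed.

Theorem theorem2p3 :
  exists (c : R) (k0 : nat), 0 < c /\
    forall (k : nat), (k0 <= k)%nat ->
    forall (N : nat) (a : nat -> nat -> Cx),
      bounded_coefs a N ->
      newton_num_vertices a k ->
      exists y0 : Cx, y0 <> C0 /\
        exists roots : list R,
          NoDup roots /\
          c * INR k <= INR (length roots) /\
          Forall (fun r => re_eval a N y0 r = 0) roots.
Proof.
  exists (1/64), 12%nat. split; [lra|].
  intros k Hk N a Hb [l [Hnd [Hlen Hiff]]].
  assert (Hv : forall p, In p l -> newton_vertex a p) by (intros; apply Hiff; auto).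
  set (f0 := fun p : nat * nat => Nat.eqb (snd p) 0).
  set (l1 := filter (fun p => negb (f0 p)) l).
  assert (Hl1 : (k <= length l1 + 2)%nat).
  { assert (H1 := filter_split_length f0 l). assert (H2 := at_most_two_j0 a l Hnd Hv).
    unfold l1. fold f0 in H2. lia. }
  assert (Hl1v : forall p, In p l1 -> newton_vertex a p /\ snd p <> 0%nat).
  { intros p Hp. unfold l1 in Hp. apply filter_In in Hp. destruct Hp as [H1 H2].
    split; auto. unfold f0 in H2. apply Bool.negb_true_iff, Nat.eqb_neq in H2. auto. }
  destruct (classify a N l1 Hb (NoDup_filter _ Hnd) (fun p Hp => proj1 (Hl1v p Hp)))
    as [U1 [U2 [W0 [N1 [N2 [I1 [I2 [HL [E1 E2]]]]]]]]].
  assert (HU : exists sg U, NoDup U /\ incl U l1 /\ (length l1 <= 2 * length U)%nat /\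
     forall v, In v U -> exists e, expo a sg (Z.of_nat W0) e v).
  { destruct (le_lt_dec (length U2) (length U1)).
    - exists 1%Z, U1. split; [auto|split; [auto|split; [lia|]]]. intros v Hv'. apply E1; auto.
    - exists (-1)%Z, U2. split; [auto|split; [auto|split; [lia|]]]. intros v Hv'. apply E2; auto. }
  destruct HU as [sg [U [HUnd [HUinc [HUlen HUex]]]]].
  assert (HUs : forall v, In v U -> support a v /\ snd v <> 0%nat).
  { intros v Hv'. destruct (Hl1v v (HUinc v Hv')) as [[Hs _] Hj]. auto. }
  destruct (sorted_items a sg (Z.of_nat W0) U HUnd (fun v Hv' => proj1 (HUs v Hv')) HUex)
    as [S [V [HSs [HSlen [HSV HSd]]]]].
  set (Af := fun e => fst (a (fst (V e)) (snd (V e)))).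
  set (Bf := fun e => snd (a (fst (V e)) (snd (V e)))).
  set (Jf := fun e => snd (V e)).
  assert (HSit : forall e, In e S -> (1 <= Jf e)%nat /\ ~ (Af e = 0 /\ Bf e = 0)).
  { intros e He. destruct (HSV e He) as [HVU _]. destruct (HUs _ HVU) as [Hs Hj].
    split; [unfold Jf; lia|]. intros [Z1 Z2]. apply Hs. unfold Af, Bf in *.
    destruct (a (fst (V e)) (snd (V e))); simpl in *; subst; reflexivity. }
  set (ng := cpairs (fun e e' => if Fourier.goodb Jf e e' then 1 else 0) S).
  assert (Hng : ng >= INR (length S) - 2).
  { apply count_good; auto. intros e e' He He' Hlt Hg.
    unfold Fourier.goodb in Hg. apply Bool.negb_false_iff, Nat.eqb_eq in Hg. unfold Jf in Hg.
    destruct (HSV e He) as [HVU He1]. destruct (HSV e' He') as [HVU' He2].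
    assert (Hne : V e <> V e') by (apply HSd; auto; lia).
    destruct (HUs _ HVU) as [S1 _]. destruct (HUs _ HVU') as [S2 _].
    assert (A1 := He1 (V e') S2 (fun h => Hne (eq_sym h))).
    assert (A2 := He2 (V e) S1 Hne).
    rewrite Hg in A1, A2.
    destruct (V e) as [i j], (V e') as [i' j']; simpl in *.
    nia. }
  assert (HSl : (k <= 2 * length S + 2)%nat) by lia.
  assert (HSl' : INR k <= 2 * INR (length S) + 2).
  { apply le_INR in HSl. rewrite plus_INR, mult_INR in HSl. simpl in HSl. lra. }
  assert (HkR : 12 <= INR k) by (apply le_INR in Hk; simpl in Hk; lra).
  assert (Hngpos : 0 < ng) by lra.
  destruct (Fourier.fourier Af Bf Jf S HSit Hngpos) as [t Ht].
  fold ng in Ht.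
  destruct (my_exists_above (fun p : nat * nat => Rabs (fst (a (fst p) (snd p))) + Rabs (snd (a (fst p) (snd p)))) (grid N))
    as [A0 HA0].
  set (A := Rmax 0 A0).
  assert (HA : 0 <= A) by apply Rmax_l.
  assert (HAb : forall i j, (i <= N)%nat -> (j <= N)%nat -> Rabs (fst (a i j)) + Rabs (snd (a i j)) <= A).
  { intros i j Hi Hj. eapply Rle_trans; [|apply Rmax_r]. left.
    apply (HA0 (i, j)). unfold grid. apply in_prod; apply in_seq; lia. }
  destruct (my_exists_above (fun e => (INR N + 1) * (INR N + 1) * A / Rabs (Fourier.cth Af Bf Jf e t)) S)
    as [T0 HT0].
  set (T := Rmax 2 T0).
  assert (HT : 1 < T) by (unfold T; eapply Rlt_le_trans; [|apply Rmax_l]; lra).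
  set (rho := powerRZ T (sg * Z.of_nat W0)).
  set (y0 := (rho * cos t, rho * sin t)).
  set (F := re_eval a N y0).
  assert (HFc : continuity F) by (unfold F, re_eval; apply continuity_finite_sum).
  assert (Hsign : forall e, In e S -> Fourier.cth Af Bf Jf e t <> 0 ->
            F (powerRZ T e) * Fourier.cth Af Bf Jf e t > 0).
  { intros e He Hc. destruct (HSV e He) as [HVU HE]. destruct (HUs _ HVU) as [Hs _].
    assert (Ec : Fourier.cth Af Bf Jf e t = cij a t (fst (V e)) (snd (V e))) by reflexivity.
    rewrite Ec in *. unfold F, y0, rho.
    apply (item_sign a N sg (Z.of_nat W0) e (V e) t T A Hb Hs HE HT HA HAb).
    specialize (HT0 e He). simpl in HT0. rewrite Ec in HT0.
    assert (Hpos : 0 < Rabs (cij a t (fst (V e)) (snd (V e)))) by (apply Rabs_pos_lt; auto).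
    assert (T0 <= T) by apply Rmax_r.
    apply div_lt_mult in HT0; auto. nra. }
  destruct S as [|e0 S'].
  { simpl in HSl'. lra. }
  destruct (roots_exist F (fun e => powerRZ T e) HFc
              (fun e e' H => powerRZ_strict T e e' HT H) S' e0 HSs)
    as [roots [R1 [R2 [R3 _]]]].
  exists y0. split.
  { unfold y0. intro E. inversion E as [[Ea Eb]].
    assert (Hr : 0 < rho) by (apply powerRZ_lt; lra).
    assert (C := sin2_cos2 t). unfold Rsqr in C.
    assert (cos t = 0) by (apply Rmult_eq_reg_l with rho; lra).
    assert (sin t = 0) by (apply Rmult_eq_reg_l with rho; lra). nra. }
  exists roots. split; [auto|split; [|exact R2]].
  assert (Hcmp : cpairs (fun e e' => if Rlt_dec (Fourier.cth Af Bf Jf e t * Fourier.cth Af Bf Jf e' t) 0 then 1 else 0) (e0 :: S')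
               <= cpairs (fun e e' => if Rlt_dec (F (powerRZ T e) * F (powerRZ T e')) 0 then 1 else 0) (e0 :: S')).
  { apply cpairs_le. intros e e' He He'.
    destruct (Rlt_dec (Fourier.cth Af Bf Jf e t * Fourier.cth Af Bf Jf e' t) 0) as [L|L];
    destruct (Rlt_dec (F (powerRZ T e) * F (powerRZ T e')) 0) as [L'|L']; try lra.
    exfalso. apply L'.
    assert (c1 : Fourier.cth Af Bf Jf e t <> 0) by (intro E; rewrite E in L; lra).
    assert (c2 : Fourier.cth Af Bf Jf e' t <> 0) by (intro E; rewrite E in L; lra).
    assert (G1 := Hsign e He c1). assert (G2 := Hsign e' He' c2).
    set (u := Fourier.cth Af Bf Jf e t) in *. set (u' := Fourier.cth Af Bf Jf e' t) in *.
    set (X1 := F (powerRZ T e)) in *. set (X2 := F (powerRZ T e')) in *.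
    assert (0 < (X1 * u) * (X2 * u')) by (apply Rmult_lt_0_compat; lra).
    nra. }
  lra.
Qed.
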